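(* Let $m,n$ be positive integers and for each $1\le i\le 2m$ let $\mathbf{x}^{(i)}=(\mathbf{x}^{(i)}_1,\dots,\mathbf{x}^{(i)}_n)$ be complex numbers in the open unit disc (or formal variables, the identity holding as formal power series). Then $$\sum_{\lambda:\ \ell(\lambda)\le n}s_\lambda(\mathbf{x}^{(1)})\cdots s_\lambda(\mathbf{x}^{(2m)})=\prod_{i=1}^{2m}\frac{1}{V(\mathbf{x}^{(i)})}\cdot\mathrm{Det}^{[2m]}\left(\frac{1}{1-\mathbf{x}^{(1)}_{i_1}\cdots\mathbf{x}^{(2m)}_{i_{2m}}}\right)_{1\le i_1,\dots,i_{2m}\le n}.$$
   Context: $V(\mathbf{x})=\prod_{1\le i<j\le n}(\mathbf{x}_i-\mathbf{x}_j)$; $s_\lambda(\mathbf{x})=\det(\mathbf{x}_i^{\lambda_j+n-j})_{1\le i,j\le n}/V(\mathbf{x})$ is the Schur polynomial in $n$ variables, the sum being over all partitions with at most $n$ parts. Hyperdeterminant: $\mathrm{Det}^{[2m]}(A):=\frac{1}{n!}\sum_{\sigma_1,\dots,\sigma_{2m}\in\mathfrak{S}_n}\mathrm{sgn}(\sigma_1)\cdots\mathrm{sgn}(\sigma_{2m})\prod_{i=1}^nA(\sigma_1(i),\dots,\sigma_{2m}(i))$. *)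

(* Defs.v *)
From HB Require Import structures.
From mathcomp Require Import all_boot all_order all_algebra all_fingroup.
From mathcomp Require Import complex.
From mathcomp Require Import all_classical all_reals all_analysis.
Set Implicit Arguments. Unset Strict Implicit. Unset Printing Implicit Defensive.
Import Order.TTheory GRing.Theory Num.Theory.
Import numFieldTopology.Exports numFieldNormedType.Exports.
Local Open Scope ring_scope.

Definition vandermonde (C : comRingType) (n : nat) (x : 'I_n -> C) : C :=
  \prod_(i < n) \prod_(j < n | (i < j)%N) (x i - x j).

(* Schur polynomial evaluated at x, bialternant definition:
   s_lam(x) = det (x_i ^ (lam_j + n - j))_{i,j} / V(x); with 0-based j the
   exponent is lam_j + (n - 1 - j). *)
Definition schur (C : fieldType) (n : nat) (lam : 'I_n -> nat) (x : 'I_n -> C) : C :=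
  \det (\matrix_(i < n, j < n) x i ^+ (lam j + (n - j.+1))%N) / vandermonde x.

(* Partitions with at most n parts and all parts < N, encoded as weakly
   decreasing functions 'I_n -> 'I_N (parts lam_1 >= ... >= lam_n >= 0). *)
Definition partitions_lt (n N : nat) : {set {ffun 'I_n -> 'I_N}} :=
  [set l : {ffun 'I_n -> 'I_N} |
     [forall i : 'I_n, forall j : 'I_n, (i <= j)%N ==> (l j <= l i)%N]].

(* Hyperdeterminant of order k (k = 2m in the paper) of a tensor
   A : ('I_k -> 'I_n) -> C, A(i_1,...,i_k) = A (fun r => i_r):
   Det(A) = 1/n! sum_{sigma_1..sigma_k in S_n} sgn(sigma_1)...sgn(sigma_k)
              prod_{i} A(sigma_1(i),...,sigma_k(i)). *)
Definition hyperdet (C : fieldType) (k n : nat) (A : ('I_k -> 'I_n) -> C) : C :=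
  (n`!%:R)^-1 *
  \sum_(s : {ffun 'I_k -> 'S_n})
     ((\prod_(r < k) (-1) ^+ odd_perm (s r)) *
      \prod_(i < n) A (fun r => s r i)).

(* Topology on the complex numbers R[i]: the canonical metric topology of the
   numeric field R[i] (the same one MathComp-Analysis gives every
   numClosedFieldType via numFieldTopology), declared on the head symbol
   `complex` so that it is found by canonical-structure inference. *)
HB.instance Definition _ (R : realType) :=
  PseudoPointedMetric.copy R[i] (R[i])^o.

(* Main.v *)
Require Import Defs.
From HB Require Import structures.
From mathcomp Require Import all_boot all_order all_algebra all_fingroup.
From mathcomp Require Import complex.
From mathcomp Require Import all_classical all_reals all_analysis.
Import Order.TTheory GRing.Theory Num.Theory.
Import numFieldTopology.Exports numFieldNormedType.Exports.
Local Open Scope classical_set_scope.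
Local Open Scope ring_scope.
Local Open Scope complex_scope.
From mathcomp Require Import zify.
Set Implicit Arguments. Unset Strict Implicit. Unset Printing Implicit Defensive.
Definition sdecrf n (f : 'I_n -> nat) :=
  [forall i : 'I_n, forall j : 'I_n, (i < j)%N ==> (f j < f i)%N].

Lemma mono_perm_id n (s : 'S_n) :
  (forall i j : 'I_n, (i < j)%N -> (s i < s j)%N) -> s = 1%g.
Proof.
move=> mono.
have ge : forall i : 'I_n, (i <= s i)%N.
  suff H : forall k (Hk : (k < n)%N), (k <= s (Ordinal Hk))%N.
    by case=> i Hi; exact: H.
  elim=> [|k IH] Hk //.
  have Hk' : (k < n)%N by apply: ltnW.
  have := IH Hk'.
  have : (s (Ordinal Hk') < s (Ordinal Hk))%N by apply: mono => /=.
  lia.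
have Esum : (\sum_(i < n) (s i : nat) = \sum_(i < n) (i : nat))%N.
  by rewrite [RHS](reindex_inj (@perm_inj _ s)).
apply/permP => i; rewrite perm1; apply: val_inj => /=.
have H0 : (\sum_(j < n) (s j - j) == 0)%N.
  by rewrite (@sumnB _ _ _ (fun j : 'I_n => j : nat) (fun j => s j) (fun j _ => ge j)) Esum subnn.
rewrite sum_nat_eq0 in H0.
have := (forallP H0) i; move: (ge i); lia.
Qed.

Lemma sort_unique n (f : 'I_n -> nat) (s : 'S_n) :
  sdecrf f -> sdecrf (fun i => f (s i)) -> s = 1%g.
Proof.
move=> /forallP H1 /forallP H2; apply: mono_perm_id => i j ij.
have := implyP ((forallP (H2 i)) j) ij.
case: (ltngtP (s i) (s j)) => // [sji|/val_inj ->]; last by rewrite ltnn.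
by have := implyP ((forallP (H1 (s j))) (s i)) sji; lia.
Qed.

Lemma sort_exists n (a : 'I_n -> nat) : injective a ->
  exists s : 'S_n, sdecrf (fun i => a (s i)).
Proof.
move=> ainj.
pose t : n.-tuple nat := [tuple a i | i < n].
pose u := sort geq t.
have pu : perm_eq u t by rewrite perm_sort.
have [p Ep] := tuple_permP pu.
exists p; apply/forallP => i; apply/forallP => j; apply/implyP => ij.
have su : sorted geq u by apply: sort_sorted => x y; exact: leq_total.
have uu : uniq u.
  rewrite (perm_uniq pu) /t /= map_inj_uniq ?enum_uniq //.
have szu : size u = n by rewrite (perm_size pu) size_tuple.
have nth_u (k : 'I_n) : nth 0 u k = a (p k).
  by rewrite Ep nth_mktuple tnth_mktuple.
have srt := su; rewrite sorted_pairwise in srt; last by move=> y x z h1 h2; exact: leq_trans h2 h1.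
have := (pairwiseP 0 srt); rewrite szu => Hp.
have := Hp i j; rewrite !inE !ltn_ord !nth_u => /(_ isT isT ij).
have : nth 0 u i != nth 0 u j.
  by rewrite nth_uniq ?szu ?ltn_ord // -[_ == _]/(val i == val j) (ltn_eqF ij).
rewrite !nth_u /geq; lia.
Qed.

Lemma sort_count n (a : 'I_n -> nat) : injective a ->
  exists s0 : 'S_n, forall s : 'S_n, sdecrf (fun i => a (s i)) = (s == s0).
Proof.
move=> ainj; have [s0 Hs0] := sort_exists ainj.
exists s0 => s; apply/idP/eqP => [Hs|->] //.
have E := @sort_unique n (fun i => a (s0 i)) (s * s0^-1)%g Hs0.
have : sdecrf (fun i => a (s0 ((s * s0^-1)%g i))).
  by apply: etrans Hs; apply: eq_forallb => i; apply: eq_forallb => j; rewrite !permM !permKV.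
move/E => E1; apply/permP => i.
have := congr1 (fun g : 'S_n => g i) E1; rewrite permM perm1 => E2.
by rewrite -[in RHS]E2 permKV.
Qed.

Lemma sum_all_sdecr (C : nzRingType) n M (G : ('I_n -> nat) -> C) :
  (forall f g, f =1 g -> G f = G g) ->
  (forall a (s : 'S_n), G (fun i => a (s i)) = G a) ->
  (forall a i j, i != j -> a i = a j -> G a = 0) ->
  \sum_(a : {ffun 'I_n -> 'I_M}) G (fun i => a i) =
  (n`!)%:R * \sum_(b : {ffun 'I_n -> 'I_M} | sdecrf (fun i => b i)) G (fun i => b i).
Proof.
move=> Gext Gperm G0.
transitivity (\sum_(a : {ffun 'I_n -> 'I_M})
   \sum_(s : 'S_n | sdecrf (fun i => a (s i))) G (fun i => a i)).
  apply: eq_bigr => a _.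
  case: (@injectiveP _ _ (fun i => (a i : nat))) => [ainj|ainj].
    have [s0 Hs0] := sort_count ainj.
    by rewrite (eq_bigl (fun s => s == s0)) ?big_pred1_eq.
  have : ~~ injectiveb (fun i => (a i : nat)) by apply/injectiveP.
  case/injectivePn => i [j ij Eij].
  by rewrite (G0 _ _ _ ij Eij) big1.
rewrite (exchange_big_dep xpredT) //=.
transitivity (\sum_(s : 'S_n)
   \sum_(b : {ffun 'I_n -> 'I_M} | sdecrf (fun i => b i)) G (fun i => b i)).
  apply: eq_bigr => s _.
  rewrite [LHS]big_mkcond [RHS]big_mkcond.
  pose h (b : {ffun 'I_n -> 'I_M}) := [ffun i => b ((s^-1)%g i)].
  have hinj : injective h.
    move=> b1 b2 E; apply/ffunP => i.
    by have := congr1 (fun f : {ffun 'I_n -> 'I_M} => f (s i)) E; rewrite !ffunE permK.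
  rewrite (reindex_inj hinj); apply: eq_bigr => b _.
  have E1 : (fun i => h b (s i)) =1 (fun i => b i) by move=> i; rewrite ffunE permK.
  have -> : sdecrf (fun i => h b (s i)) = sdecrf (fun i => b i).
    by apply: eq_forallb => i; apply: eq_forallb => j; rewrite !ffunE !permK.
  case: ifP => // _.
  rewrite -(Gperm _ s); apply: Gext => i /=; by rewrite ffunE permK.
by rewrite sumr_const card_Sn mulr_natl.
Qed.

Lemma chain (f : nat -> nat) n : (forall k, (k.+1 < n)%N -> (f k.+1 <= f k)%N) ->
  forall i j, (i <= j)%N -> (j < n)%N -> (f j <= f i)%N.
Proof.
move=> H i; elim=> [|j IH] ij jn.
  by move: ij; rewrite leqn0 => /eqP ->.
case: (leqP i j) => [ij'|ji].
  exact: leq_trans (H j jn) (IH ij' (ltnW jn)).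
by have -> : i = j.+1 by lia.
Qed.

Lemma sdecr_chain n' (b : 'I_n'.+1 -> nat) : sdecrf b ->
  forall i j : 'I_n'.+1, (i <= j)%N -> (b j + j <= b i + i)%N.
Proof.
move=> /forallP H i j ij.
pose f k := (b (inord k) + k)%N.
have step k : (k.+1 < n'.+1)%N -> (f k.+1 <= f k)%N.
  move=> kn; rewrite /f.
  have := implyP (forallP (H (inord k)) (inord k.+1)).
  rewrite !inordK; [|lia|lia] => /(_ (ltnSn k)); lia.
have := chain step ij (ltn_ord j).
by rewrite /f !inord_val.
Qed.

Lemma hlt n N (l : 'I_N) (i : 'I_n) : (l + (n - i.+1) < N + n.-1)%N.
Proof. have := ltn_ord l; have := ltn_ord i; lia. Qed.

Lemma sum_sdecr (C : nmodType) n N (G : ('I_n -> nat) -> C) : (0 < n)%N ->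
  (forall f g, f =1 g -> G f = G g) ->
  \sum_(b : {ffun 'I_n -> 'I_(N + n.-1)} | sdecrf (fun i => b i)) G (fun i => b i)
  = \sum_(l in partitions_lt n N) G (fun i => (l i + (n - i.+1))%N).
Proof.
case: n G => [//|n'] G _ Gext.
pose h (l : {ffun 'I_n'.+1 -> 'I_N}) : {ffun 'I_n'.+1 -> 'I_(N + n'.+1.-1)} :=
  [ffun i => Ordinal (hlt (l i) i)].
transitivity (\sum_(b in h @: partitions_lt n'.+1 N) G (fun i => b i)).
  apply: eq_bigl => b; apply/idP/imsetP.
    move=> Hb; have Hc := sdecr_chain Hb.
    have lo (i : 'I_n'.+1) : (n'.+1 - i.+1 <= b i)%N.
      have := Hc i ord_max (leq_ord i); have := ltn_ord i; rewrite /=; lia.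
    have hi (i : 'I_n'.+1) : (b i - (n'.+1 - i.+1) < N)%N.
      have := Hc ord0 i (leq0n _); have := ltn_ord (b ord0); have := ltn_ord i; have := lo i; rewrite /=; lia.
    exists [ffun i => Ordinal (hi i)].
      rewrite inE; apply/forallP => i; apply/forallP => j; apply/implyP => ij.
      rewrite !ffunE /=; have := Hc i j ij; have := lo i; have := lo j; have := ltn_ord i; have := ltn_ord j; rewrite /=; lia.
    apply/ffunP => i; apply: val_inj; rewrite !ffunE /=; have := lo i; have := ltn_ord i; rewrite /=; lia.
  case=> l; rewrite inE => /forallP Hl ->.
  apply/forallP => i; apply/forallP => j; apply/implyP => ij; rewrite !ffunE /=.
  have := implyP (forallP (Hl i) j) (ltnW ij); have := ltn_ord j; lia.
rewrite big_imset /=.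
  by apply: eq_bigr => l _; apply: Gext => i; rewrite ffunE.
move=> l1 l2 _ _ E; apply/ffunP => i; apply: val_inj.
have := congr1 (fun f : {ffun 'I_n'.+1 -> 'I_(N + n'.+1.-1)} => val (f i)) E; rewrite !ffunE /=; lia.
Qed.


Definition alt (C : comRingType) n (y : 'I_n -> C) (a : 'I_n -> nat) : C :=
  \det (\matrix_(i, j) y j ^+ a i).

Lemma alt_ext (C : comRingType) n (y : 'I_n -> C) f g : f =1 g -> alt y f = alt y g.
Proof. by move=> E; rewrite /alt; congr (\det _); apply/matrixP => i j; rewrite !mxE E. Qed.

Lemma alt_perm (C : comRingType) n (y : 'I_n -> C) a (s : 'S_n) :
  alt y (fun i => a (s i)) = (-1) ^+ s * alt y a.
Proof.
rewrite /alt -det_perm -det_mulmx -row_permE; congr (\det _).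
by apply/matrixP => i j; rewrite !mxE.
Qed.

Lemma alt0 (C : comRingType) n (y : 'I_n -> C) a i j :
  i != j -> a i = a j -> alt y a = 0.
Proof.
move=> ij Eij; apply: (determinant_alternate ij) => k; by rewrite !mxE Eij.
Qed.

Lemma hyper_expand (C : fieldType) k n M (x : 'I_k -> 'I_n -> C) :
  hyperdet (fun f : 'I_k -> 'I_n => \sum_(c < M) (\prod_(r < k) x r (f r)) ^+ c)
  = (n`!%:R)^-1 * \sum_(a : {ffun 'I_n -> 'I_M}) \prod_(r < k) alt (x r) (fun i => a i).
Proof.
rewrite /hyperdet; congr (_ * _).
under eq_bigr do rewrite bigA_distr_bigA mulr_sumr.
rewrite exchange_big /=; apply: eq_bigr => a _.
rewrite /alt /determinant bigA_distr_bigA /=; apply: eq_bigr => s _.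
rewrite big_split /=; congr (_ * _).
under eq_bigr do rewrite -prodrXl.
rewrite exchange_big /=; apply: eq_bigr => r _; apply: eq_bigr => i _.
by rewrite !mxE.
Qed.

Lemma key (C : fieldType) m n (x : 'I_(2 * m) -> 'I_n -> C) N :
  (0 < m)%N -> (0 < n)%N -> (n`!%:R : C) != 0 ->
  \sum_(l in partitions_lt n N) \prod_(k < 2 * m) schur (fun j => nat_of_ord (l j)) (x k)
  = (\prod_(k < 2 * m) (vandermonde (x k))^-1) *
    hyperdet (fun f : 'I_(2 * m) -> 'I_n =>
      \sum_(c < N + n.-1) (\prod_(k < 2 * m) x k (f k)) ^+ c).
Proof.
move=> m0 n0 nf.
pose G (a : 'I_n -> nat) := \prod_(r < 2 * m) alt (x r) a.
have Gext : forall f g, f =1 g -> G f = G g.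
  by move=> f g E; apply: eq_bigr => r _; apply: alt_ext.
have Gperm : forall a (s : 'S_n), G (fun i => a (s i)) = G a.
  move=> a s; rewrite /G.
  under eq_bigr do rewrite alt_perm.
  rewrite big_split /= prodr_const card_ord exprM sqrr_sign expr1n mul1r //.
have G0 : forall a i j, i != j -> a i = a j -> G a = 0.
  have m2 : (0 < 2 * m)%N by lia.
  move=> a i j ij Eij; rewrite /G (bigD1 (Ordinal m2)) //=.
  by rewrite (@alt0 _ _ (x _) a i j ij Eij) mul0r.
rewrite hyper_expand.
have := sum_all_sdecr (N + n.-1) Gext Gperm G0; rewrite /G => ->.
rewrite [X in _ * X]mulrA mulVf // mul1r.
have := sum_sdecr N n0 Gext; rewrite /G => ->.
rewrite mulr_sumr; apply: eq_bigr => l _.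
rewrite -big_split /=; apply: eq_bigr => r _.
rewrite /schur mulrC; congr (_ * _).
rewrite /alt -det_tr; congr (\det _); apply/matrixP => i j; rewrite !mxE //.
Qed.
Lemma hyperdet_cvg (R : realType) k n (A : nat -> ('I_k -> 'I_n) -> R[i])
  (L : ('I_k -> 'I_n) -> R[i]) :
  (forall f, (fun M => A M f) @ \oo --> L f) ->
  (fun M => hyperdet (A M)) @ \oo --> hyperdet L.
Proof.
move=> HA; rewrite /hyperdet.
have addC : continuous (fun x : R[i] * R[i] => x.1 + x.2) by exact: (@pseudometric_normed_Zmodule.add_continuous R[i] R[i]^o).
have mulC : continuous (fun x : R[i] * R[i] => x.1 * x.2) by exact: (@mul_continuous R[i]).
apply: (@cvgMl_tmp R[i]).
apply: (cvg_big addC) => s _.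
apply: (@cvgMl_tmp R[i]).
apply: (cvg_big mulC) => i _.
exact: HA.
Qed.

Lemma expr_cvg0 (R : realType) (p : R[i]) : `|p| < 1 -> (fun M : nat => p ^+ M) @ \oo --> 0.
Proof.
move=> p1.
have rge0 : 0 <= `|p| by [].
pose r := complex.Re `|p|.
have Er : `|p| = r%:C.
  rewrite [LHS]complexE /r (ger0_Im rge0) /=.
  by rewrite mulr0 addr0.
have r1 : `|r| < 1.
  by rewrite ger0_norm -?ler0c -?Er // -ltcR -Er.
have := cvg_expr r1.
move=> /cvgr0Pnorm_lt H.
apply/(@cvgr0Pnorm_lt R[i] R[i]^o) => eps eps0.
have epsE : eps = (complex.Re eps)%:C.
  by rewrite [LHS]complexE (ger0_Im (ltW eps0)) mulr0 addr0.
have e0 : 0 < complex.Re eps by rewrite -ltcR -epsE.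
apply: filterS (H _ e0) => M /= HM.
rewrite normrX Er -rmorphXn /= epsE ltcR.
exact: le_lt_trans (ler_norm _) HM.
Qed.
Lemma geom_cvg (R : realType) (p : R[i]) : `|p| < 1 ->
  (fun M : nat => \sum_(c < M) p ^+ c) @ \oo --> (1 - p)^-1.
Proof.
move=> p1.
have p1' : 1 - p != 0.
  rewrite subr_eq0; apply/eqP => E; move: p1; rewrite -E normr1 ltxx //.
have E M : \sum_(c < M) p ^+ c = (1 - p ^+ M) * (1 - p)^-1.
  apply: (@mulIf _ (1 - p)) => //; rewrite mulfVK //.
  by rewrite mulrC -opprB mulNr -subrX1 opprB.
have H : (fun M : nat => (1 - p ^+ M) * (1 - p)^-1) @ \oo --> (1 - 0) * (1 - p)^-1.
  apply: (@cvgMr_tmp R[i] nat \oo _ (fun M => 1 - p ^+ M)).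
  apply: (@cvgB R[i] R[i]^o); first exact: cvg_cst.
  exact: expr_cvg0.
rewrite subr0 mul1r in H.
by under eq_cvg do rewrite E.
Qed.

Unset Implicit Arguments.
Local Close Scope complex_scope.

Theorem corollary3p2 (R : realType) (m n : nat) (x : 'I_(2 * m) -> 'I_n -> R[i]) :
  (0 < m)%N -> (0 < n)%N ->
  (forall k j, `|x k j| < 1) ->
  (forall k, injective (x k)) ->
  (fun N : nat => \sum_(l in partitions_lt n N)
       \prod_(k < 2 * m) schur (fun j => nat_of_ord (l j)) (x k))
  @ \oo -->
  (\prod_(k < 2 * m) (vandermonde (x k))^-1) *
    hyperdet (fun f : 'I_(2 * m) -> 'I_n =>
                (1 - \prod_(k < 2 * m) x k (f k))^-1).
Proof.
move=> m0 n0 xlt xinj.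
have nf : (n`!%:R : R[i]) != 0 by rewrite pnatr_eq0 -lt0n fact_gt0.
have -> : (fun N : nat => \sum_(l in partitions_lt n N)
       \prod_(k < 2 * m) schur (fun j => nat_of_ord (l j)) (x k)) =
  (fun N => (\prod_(k < 2 * m) (vandermonde (x k))^-1) *
    hyperdet (fun f : 'I_(2 * m) -> 'I_n =>
      \sum_(c < N + n.-1) (\prod_(k < 2 * m) x k (f k)) ^+ c)).
  by apply: funext => N; apply: key.
apply: (@cvgMl_tmp R[i]).
have pl : forall f : 'I_(2 * m) -> 'I_n, `|\prod_(k < 2 * m) x k (f k)| < 1.
  move=> f; have m2 : (0 < 2 * m)%N by lia.
  rewrite normr_prod (bigD1 (Ordinal m2)) //=.
  apply: le_lt_trans (xlt (Ordinal m2) (f (Ordinal m2))).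
  apply: ler_piMr => //; apply: prodr_ile1 => r _.
  by rewrite normr_ge0 /= ltW.
have H := hyperdet_cvg (fun f => geom_cvg (pl f)).
by rewrite -(cvg_shiftn n.-1) in H.
Qed.
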